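(* Let $m\ge1$, $0\le r\le m$, $\delta\in(0,\tfrac12)$, and let $W$ be the random coefficient vector described in the context. Let $A\in GL_m(\mathbb{F}_2)$, $b\in\mathbb{F}_2^m$, and let $\pi=\pi_{A,b,r}:\mathbb{F}_2^{\binom{m}{r}}\to\mathbb{F}_2^{\binom{m}{r}}$ be the map sending the coefficient vector $(u_I)_{|I|=r}$ of $P(x)=\sum_{|I|=r}u_Ix_I$ to the vector of coefficients of the degree-$r$ monomials $x_J$ ($|J|=r$) in the multilinear reduction of $P(Ax+b)$. Then for every linear subspace $\mathcal{G}\subseteq\mathbb{F}_2^{\binom{m}{r}}$, \[d(U_{\mathcal{G}};\,W_r|W_{>r})=d(U_{\pi(\mathcal{G})};\,W_r|W_{>r}),\] where $\pi(\mathcal{G})=\{\pi(g):g\in\mathcal{G}\}$ and $U_{\mathcal{H}}$ denotes a uniform random variable on $\mathcal{H}$.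
   Context: Let $n=2^m$. Every function $\mathbb{F}_2^m\to\mathbb{F}_2$ is uniquely a multilinear polynomial $\sum_{S\subseteq[m]}c_Sx_S$ with $x_S=\prod_{i\in S}x_i$; ''multilinear reduction'' means using $x_i^2=x_i$. Let $Z=(Z_x)_{x\in\mathbb{F}_2^m}$ have i.i.d. Bernoulli$(\delta)$ entries, and let $W=(W_S)_{S\subseteq[m]}$ be the coefficient vector of the multilinear polynomial whose evaluation table on $\mathbb{F}_2^m$ is $Z$ (equivalently $W_S=\sum_{x:\,\{i:x_i=1\}\subseteq S}Z_x$). Set $W_r=(W_S)_{|S|=r}$ and $W_{>r}=(W_S)_{|S|>r}$. Entropies are base 2, $H(V|C)=H(V,C)-H(C)$. For a subspace $\mathcal{H}$, $d(U_{\mathcal{H}};W_r|W_{>r}):=H(U+W'_r\mid W'_{>r})-\tfrac12\big(H(U)+H(W_r|W_{>r})\big)$, where $(W'_r,W'_{>r})\sim(W_r,W_{>r})$ and $U\sim U_{\mathcal{H}}$ is independent of it. *)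

(* Defs.v *)
From HB Require Import structures.
From mathcomp Require Import all_boot all_order all_algebra.
From mathcomp Require Import reals exp.
Set Implicit Arguments. Unset Strict Implicit. Unset Printing Implicit Defensive.
Import Order.TTheory GRing.Theory Num.Theory.
Local Open Scope ring_scope.

Definition supp_in m (x : 'cV['F_2]_m) (S : {set 'I_m}) : bool :=
  [forall i, (x i ord0 != 0) ==> (i \in S)].

(* coefficient c_S of the (unique) multilinear polynomial with evaluation table f:
   c_S = sum_{x : supp x ⊆ S} f x  (Möbius inversion, as in the context) *)
Definition anf m (f : 'cV['F_2]_m -> 'F_2) (S : {set 'I_m}) : 'F_2 :=
  \sum_(x : 'cV['F_2]_m | supp_in x S) f x.

Definition monom m (S : {set 'I_m}) (x : 'cV['F_2]_m) : 'F_2 :=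
  \prod_(i in S) x i ord0.

Notation rset m r := {S : {set 'I_m} | #|S| == r}.
Notation gtset m r := {S : {set 'I_m} | (r < #|S|)%N}.
Notation rvec m r := {ffun rset m r -> 'F_2}.

Definition poly_eval m r (u : rvec m r) (y : 'cV['F_2]_m) : 'F_2 :=
  \sum_(I : rset m r) u I * monom (val I) y.

Definition pi_map m r (A : 'M['F_2]_m) (b : 'cV['F_2]_m) (u : rvec m r) : rvec m r :=
  [ffun J : rset m r => anf (fun x => poly_eval u (A *m x + b)) (val J)].

Definition is_subspace m r (G : {set rvec m r}) : Prop :=
  [/\ 0 \in G,
      (forall u v, u \in G -> v \in G -> u + v \in G) &
      (forall (a : 'F_2) u, u \in G -> [ffun i => a * u i] \in G)].

Section Prob.
Variable R : realType.

Definition log2 (x : R) : R := ln x / ln 2.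

(* Shannon entropy (base 2) of the random variable f under the weights p on T
   (with the convention 0 log 0 = 0, automatic since 0 * _ = 0). *)
Definition entropy (T V : finType) (p : T -> R) (f : T -> V) : R :=
  - \sum_(v : V) ((\sum_(t | f t == v) p t) * log2 (\sum_(t | f t == v) p t)).

Definition pZ m (delta : R) (z : {ffun 'cV['F_2]_m -> 'F_2}) : R :=
  \prod_(x : 'cV['F_2]_m) (if z x == 1 then delta else 1 - delta).

Definition Wr m r (z : {ffun 'cV['F_2]_m -> 'F_2}) : rvec m r :=
  [ffun J : rset m r => anf z (val J)].

Definition Wgt m r (z : {ffun 'cV['F_2]_m -> 'F_2}) : {ffun gtset m r -> 'F_2} :=
  [ffun S : gtset m r => anf z (val S)].

Definition unif (T : finType) (H : {set T}) (u : T) : R :=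
  if u \in H then (#|H|%:R)^-1 else 0.

(* d(U_H ; W_r | W_{>r}) with U independent of (W'_r, W'_{>r}) *)
Definition dist_d m r (delta : R) (H : {set rvec m r}) : R :=
  let pj := fun w : rvec m r * {ffun 'cV['F_2]_m -> 'F_2} => unif H w.1 * pZ delta w.2 in
  (entropy pj (fun w => (w.1 + Wr r w.2, Wgt r w.2)) - entropy pj (fun w => Wgt r w.2))
  - 2^-1 * (entropy (unif H) id
            + (entropy (pZ delta) (fun z : {ffun 'cV['F_2]_m -> 'F_2} => (Wr r z, Wgt r z))
               - entropy (pZ delta) (fun z : {ffun 'cV['F_2]_m -> 'F_2} => Wgt r z))).

End Prob.

(* Main.v *)
Require Import Defs.
From HB Require Import structures.
From mathcomp Require Import all_boot all_order all_algebra.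
From mathcomp Require Import reals exp.
Import Order.TTheory GRing.Theory Num.Theory.
Local Open Scope ring_scope.

Module Helpers.
Set Implicit Arguments. Unset Strict Implicit. Unset Printing Implicit Defensive.


Notation F := 'F_2.

Lemma F2_cases (a : F) : a = 0 \/ a = 1.
Proof. case: a => [[|[|n]]] //= H; [left|right]; exact: val_inj. Qed.
Lemma F2_2 : (2%:R : F) = 0. Proof. by apply: val_inj. Qed.

Section Alg.
Variable m : nat.
Notation V := 'cV[F]_m.

Definition supp (x : V) : {set 'I_m} := [set i | x i ord0 != 0].
Definition chi (Y : {set 'I_m}) : V := \col_i (i \in Y)%:R.

Lemma supp_chi Y : supp (chi Y) = Y.
apply/setP => i; rewrite inE mxE; by case: (i \in Y).
Qed.

Lemma entry_supp (x : V) i : x i ord0 = (i \in supp x)%:R.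
Proof. rewrite inE; case: (F2_cases (x i ord0)) => ->; by rewrite ?eqxx ?oner_neq0. Qed.

Lemma chi_supp x : chi (supp x) = x.
Proof. apply/matrixP => i j; rewrite mxE (ord1 j) entry_supp //. Qed.

Lemma supp_inj : injective supp.
Proof. by move=> x y E; rewrite -(chi_supp x) E chi_supp. Qed.

Lemma supp_inE x S : supp_in x S = (supp x \subset S).
Proof.
apply/forallP/subsetP => [H i|H i]; first by rewrite inE => /(implyP (H i)).
by apply/implyP => Hi; apply: H; rewrite inE.
Qed.

Lemma monomE S x : monom S x = (S \subset supp x)%:R.
Proof.
rewrite /monom; case: (boolP (S \subset supp x)) => [/subsetP H|].
  by rewrite big1 // => i /H; rewrite entry_supp => ->.
case/subsetPn => i iS niS; rewrite (bigD1 i) //= entry_supp (negbTE niS).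
by rewrite mul0r.
Qed.

Lemma sum_supp (G : {set 'I_m} -> F) : \sum_(x : V) G (supp x) = \sum_Y G Y.
Proof.
rewrite (reindex chi) /=; first by apply: eq_bigr => Y _; rewrite supp_chi.
by exists supp => x _; [rewrite supp_chi | rewrite chi_supp].
Qed.

Lemma count_interval (A B : {set 'I_m}) :
  \sum_(S : {set 'I_m}) ((A \subset S) && (S \subset B))%:R = (A == B)%:R :> F.
Proof.
rewrite -natr_sum -big_mkcond /= sum1_card.
case: (boolP (A \subset B)) => AB; last first.
  rewrite (_ : #|_| = 0)%N; last first.
    apply: eq_card0 => S; rewrite !inE /=.
    apply/negP => /andP[H1 H2]; by rewrite (subset_trans H1 H2) in AB.
  by case: eqP => // E; rewrite E subxx in AB.
have E : [pred S : {set 'I_m} | (A \subset S) && (S \subset B)] =i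
         [set A :|: Y | Y in powerset (B :\: A)].
  move=> S; rewrite !inE; apply/andP/imsetP => [[H1 H2]|[Y]].
    exists (S :\: A); first by rewrite inE; apply: setSD.
    by apply/setP => i; rewrite !inE; case: (i \in A) (subsetP H1 i) => //= ->.
  rewrite inE => YB ->; split; first exact: subsetUl.
  by rewrite subUset AB /= (subset_trans YB) // subsetDl.
rewrite (eq_card E) card_in_imset; last first.
  move=> Y1 Y2; rewrite !inE => H1 H2 EY.
  have K (Y : {set 'I_m}) : Y \subset B :\: A -> Y = (A :|: Y) :\: A.
    move=> HY; apply/setP => i; rewrite !inE.
    case: (boolP (i \in A)) => iA //=; rewrite ?orbT ?andbT //.
    by apply/negP => /(subsetP HY); rewrite inE iA.
  by rewrite (K _ H1) (K _ H2) EY.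
rewrite card_powerset natrX F2_2 expr0n.
suff -> : (#|B :\: A| == 0%N) = (A == B) by [].
apply/idP/idP.
  rewrite cards_eq0 setD_eq0 => BA; by rewrite eqEsubset AB BA.
by move/eqP => ->; rewrite setDv cards0.
Qed.

Lemma anf_gen (I : finType) (d : I -> F) (g : I -> {set 'I_m}) S :
  anf (fun x => \sum_i d i * monom (g i) x) S = \sum_(i | g i == S) d i.
Proof.
rewrite /anf.
transitivity (\sum_i d i * \sum_(x : V) ((g i \subset supp x) && (supp x \subset S))%:R).
  rewrite (eq_bigl (fun x => supp x \subset S)); last by move=> x; rewrite supp_inE.
  rewrite big_mkcond /=.
  rewrite (eq_bigr (fun i => \sum_x d i * ((g i \subset supp x) && (supp x \subset S))%:R)); last by move=> i _; rewrite mulr_sumr.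
  rewrite [RHS]exchange_big /=; apply: eq_bigr => x _.
  case: (supp x \subset S).
    by apply eq_bigr => i _; rewrite monomE andbT.
  by rewrite big1 // => i _; rewrite andbF mulr0.
rewrite [RHS]big_mkcond /=; apply: eq_bigr => i _.
rewrite (sum_supp (fun Y => ((g i \subset Y) && (Y \subset S))%:R)) count_interval.
by case: (g i == S); rewrite ?mulr1 ?mulr0.
Qed.

Lemma anf_inv (f : V -> F) x : f x = \sum_S anf f S * monom S x.
Proof.
rewrite /anf.
transitivity (\sum_(y : V) f y * \sum_(S : {set 'I_m}) ((supp y \subset S) && (S \subset supp x))%:R);
  last first.
  apply: esym.
  rewrite (eq_bigr (fun S : {set 'I_m} => \sum_(y : V) f y * ((supp y \subset S) && (S \subset supp x))%:R)); last first.
    move=> S _; rewrite big_mkcond /= mulr_suml; apply: eq_bigr => y _.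
    rewrite supp_inE monomE.
    by case: (supp y \subset S); case: (S \subset supp x); rewrite /= ?mulr1 ?mul1r ?mulr0 ?mul0r.
  by rewrite exchange_big /=; apply: eq_bigr => y _; rewrite mulr_sumr.
rewrite (bigD1 x) //= count_interval eqxx mulr1 big1 ?addr0 // => y yx.
rewrite count_interval; case: eqP => [/supp_inj E|]; last by rewrite mulr0.
by rewrite E eqxx in yx.
Qed.


Definition deglt k (f : V -> F) := forall S : {set 'I_m}, (k <= #|S|)%N -> anf f S = 0.

Lemma anf_ext (f g : V -> F) S : f =1 g -> anf f S = anf g S.
Proof. by move=> E; apply: eq_bigr => x _. Qed.

Lemma anfD (f g : V -> F) S : anf (fun x => f x + g x) S = anf f S + anf g S.
Proof. by rewrite /anf big_split. Qed.

Lemma anfB (f g : V -> F) S : anf (fun x => f x - g x) S = anf f S - anf g S.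
Proof. by rewrite /anf sumrB. Qed.

Lemma anfZ a (f : V -> F) S : anf (fun x => a * f x) S = a * anf f S.
Proof. by rewrite /anf mulr_sumr. Qed.

Lemma anf_sum (I : finType) (g : I -> V -> F) S :
  anf (fun x => \sum_i g i x) S = \sum_i anf (g i) S.
Proof. by rewrite /anf exchange_big. Qed.

Lemma deglt_ext k (f g : V -> F) : f =1 g -> deglt k g -> deglt k f.
Proof. by move=> E H S HS; rewrite (anf_ext _ E) H. Qed.

Lemma deglt_mono k k' f : (k <= k')%N -> deglt k f -> deglt k' f.
Proof. by move=> kk H S HS; apply: H; apply: leq_trans HS. Qed.

Lemma deglt_add k f g : deglt k f -> deglt k g -> deglt k (fun x => f x + g x).
Proof. by move=> Hf Hg S HS; rewrite anfD Hf ?Hg ?addr0. Qed.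

Lemma deglt_scale k a f : deglt k f -> deglt k (fun x => a * f x).
Proof. by move=> Hf S HS; rewrite anfZ Hf ?mulr0. Qed.

Lemma deglt_zero k : deglt k (fun _ => 0).
Proof. by move=> S _; rewrite /anf big1. Qed.

Lemma deglt_sum k (I : finType) (g : I -> V -> F) :
  (forall i, deglt k (g i)) -> deglt k (fun x => \sum_i g i x).
Proof. by move=> H S HS; rewrite anf_sum big1 // => i _; apply: H. Qed.

Lemma span_gen k (I : finType) (d : I -> F) (g : I -> {set 'I_m}) :
  (forall i, (k <= #|g i|)%N -> d i = 0) ->
  deglt k (fun x => \sum_i d i * monom (g i) x).
Proof.
move=> H S HS; rewrite anf_gen big1 // => i /eqP E; apply: H; by rewrite E.
Qed.

Lemma deglt_const a : deglt 1 (fun _ => a).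
Proof.
apply: (deglt_ext (g := fun x => \sum_(i < 1) a * monom set0 x)).
  by move=> x; rewrite big_ord1 /monom big_set0 mulr1.
by apply: span_gen => i; rewrite cards0.
Qed.

Lemma deglt_mulx k j f : deglt k f -> deglt k.+1 (fun x => x j ord0 * f x).
Proof.
move=> H.
apply: (deglt_ext (g := fun x => \sum_S anf f S * monom (j |: S) x)).
  move=> x; rewrite {1}(anf_inv f x) mulr_sumr; apply: eq_bigr => S _.
  rewrite !monomE subUset sub1set entry_supp.
  by case: (j \in supp x); case: (S \subset supp x); rewrite /= ?mul1r ?mul0r ?mulr0 ?mulr1.
apply: span_gen => S HS; apply: H.
by move: HS; rewrite cardsU1; case: (j \notin S) => /=; rewrite ?add0n ?add1n // => /ltnW.
Qed.

Lemma deglt_aff k (a : 'I_m -> F) c f : deglt k f ->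
  deglt k.+1 (fun x => (\sum_j a j * x j ord0 + c) * f x).
Proof.
move=> H.
apply: (deglt_ext (g := fun x => \sum_j a j * (x j ord0 * f x) + c * f x)).
  by move=> x; rewrite mulrDl mulr_suml; congr (_ + _); apply: eq_bigr => j _; rewrite mulrA.
apply: deglt_add; last by apply: deglt_scale; apply: deglt_mono H.
apply: deglt_sum => j; apply: deglt_scale; exact: deglt_mulx.
Qed.

Lemma deglt_prod (a : 'I_m -> 'I_m -> F) (c : 'I_m -> F) n (S : {set 'I_m}) :
  #|S| = n ->
  deglt n.+1 (fun x => \prod_(i in S) (\sum_j a i j * x j ord0 + c i)).
Proof.
elim: n S => [|n IH] S HS.
  move/eqP: HS; rewrite cards_eq0 => /eqP ->.
  apply: (deglt_ext (g := fun _ => 1)); last exact: deglt_const.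
  by move=> x; rewrite big_set0.
have : (0 < #|S|)%N by rewrite HS.
case/card_gt0P => i iS.
apply: (deglt_ext (g := fun x => (\sum_j a i j * x j ord0 + c i) *
                     \prod_(i' in S :\ i) (\sum_j a i' j * x j ord0 + c i'))).
  move=> x; rewrite (bigD1 i) //=; congr (_ * _).
  by apply: eq_bigl => i'; rewrite !inE andbC.
apply: deglt_aff; apply: IH.
by move: HS; rewrite (cardsD1 i) iS => -[].
Qed.

Lemma deglt_comp k (A : 'M[F]_m) (b : V) f :
  deglt k f -> deglt k (fun x => f (A *m x + b)).
Proof.
move=> H.
apply: (deglt_ext (g := fun x => \sum_S anf f S *
          \prod_(i in S) (\sum_j A i j * x j ord0 + b i ord0))).
  move=> x; rewrite (anf_inv f); apply: eq_bigr => S _; congr (_ * _).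
  by rewrite /monom; apply: eq_bigr => i _; rewrite !mxE.
apply: deglt_sum => S.
case: (leqP k #|S|) => HS.
  rewrite H //; apply: (deglt_ext (g := fun _ => 0)); last exact: deglt_zero.
  by move=> x; rewrite mul0r.
apply: deglt_scale; apply: (deglt_mono HS); exact: (deglt_prod A (fun i => b i ord0) (erefl #|S|)).
Qed.

End Alg.


Section Aff.
Variables (m r : nat) (A : 'M[F]_m) (b : 'cV[F]_m).
Hypothesis hA : A \in unitmx.
Notation V := 'cV[F]_m.

Lemma T_inj : injective (fun x : V => A *m x + b).
Proof.
move=> x y /(congr1 (fun z => invmx A *m (z - b))) /=.
by rewrite !addrK !mulKmx.
Qed.

Lemma T_Tinv x : A *m (invmx A *m x + - (invmx A *m b)) + b = x.
Proof. by rewrite mulmxDr mulmxN !mulmxA mulmxV // !mul1mx subrK. Qed.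

Lemma deglt_comp_iff k (f : V -> F) : deglt k (fun x => f (A *m x + b)) <-> deglt k f.
Proof.
split; last exact: deglt_comp.
move=> H; apply: (deglt_ext (g := fun x => (fun y => f (A *m y + b)) (invmx A *m x + - (invmx A *m b)))).
  by move=> x /=; rewrite T_Tinv.
exact: (deglt_comp (invmx A) (- (invmx A *m b)) H).
Qed.

Definition wr (f : V -> F) : rvec m r := [ffun J => anf f (val J)].

Lemma anf_pe (u : rvec m r) S : anf (poly_eval u) S = \sum_(I : rset m r | val I == S) u I.
Proof. exact: (anf_gen u (fun I : rset m r => val I)). Qed.

Lemma wr_pe u : wr (poly_eval u) = u.
Proof.
apply/ffunP => J; rewrite ffunE anf_pe (big_pred1 J) // => I /=.
Qed.

Lemma deglt_pe (u : rvec m r) : deglt r.+1 (poly_eval u).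
Proof.
move=> S HS; rewrite anf_pe big_pred0 // => I; apply/negP => /eqP E.
by move: (valP I); rewrite E => /eqP e; rewrite e ltnn in HS.
Qed.

Notation pi := (pi_map A b).

Lemma pe_add (u v : rvec m r) y : poly_eval (u + v) y = poly_eval u y + poly_eval v y.
Proof. by rewrite /poly_eval -big_split; apply: eq_bigr => I _; rewrite ffunE mulrDl. Qed.

Lemma pe_sub (u v : rvec m r) y : poly_eval (u - v) y = poly_eval u y - poly_eval v y.
Proof. by rewrite /poly_eval -sumrB; apply: eq_bigr => I _; rewrite !ffunE mulrBl. Qed.

Lemma pi_add (u v : rvec m r) : pi (u + v) = pi u + pi v.
Proof. by apply/ffunP => J; rewrite !ffunE -anfD; apply: anf_ext => x; exact: pe_add. Qed.

Lemma pi_sub (u v : rvec m r) : pi (u - v) = pi u - pi v.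
Proof. by apply/ffunP => J; rewrite !ffunE -anfB; apply: anf_ext => x; exact: pe_sub. Qed.

Lemma pi0 : pi_map (r := r) A b 0 = 0.
Proof. by have := pi_sub 0 0; rewrite subrr => ->; rewrite subrr. Qed.

Lemma key_Wr (f : V -> F) : deglt r.+1 f ->
  [ffun J : rset m r => anf (fun x => f (A *m x + b)) (val J)] = pi (wr f).
Proof.
move=> Hf.
pose h := fun x => f x - poly_eval (wr f) x.
have Hh : deglt r h.
  move=> S HS; rewrite anfB anf_pe.
  case: (ltnP r #|S|) => HS2.
    rewrite Hf // big_pred0 ?subrr // => I; apply/negP => /eqP E.
    by move: (valP I); rewrite E => /eqP e; rewrite e ltnn in HS2.
  have ES : #|S| == r by rewrite eqn_leq HS2 HS.
  rewrite (big_pred1 (exist _ S ES)) ?ffunE /= ?subrr // => I /=.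
have Hh' := deglt_comp A b Hh.
apply/ffunP => J; rewrite !ffunE.
rewrite (anf_ext (g := fun x => poly_eval (wr f) (A *m x + b) + h (A *m x + b))); last first.
  by move=> x; rewrite /h [RHS]addrC subrK.
by rewrite anfD (Hh' (val J)) ?addr0 // (eqP (valP J)).
Qed.

Lemma pi_inj : injective (pi_map (r := r) A b).
Proof.
move=> u v E; apply/eqP; rewrite -subr_eq0; apply/eqP.
have Hw : pi (u - v) = 0 by rewrite pi_sub E subrr.
move: Hw; set w := u - v => Hw.
have H1 : deglt r.+1 (fun x => poly_eval w (A *m x + b)) := deglt_comp A b (deglt_pe w).
have H2 : deglt r (fun x => poly_eval w (A *m x + b)).
  move=> S HS; case: (ltnP r #|S|) => HS2; first exact: H1.
  have ES : #|S| == r by rewrite eqn_leq HS2 HS.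
  by move/ffunP: Hw => /(_ (exist _ S ES)); rewrite !ffunE.
have H3 := proj1 (deglt_comp_iff _ _) H2.
apply/ffunP => J; rewrite [RHS]ffunE; have := congr1 (fun g : rvec m r => g J) (wr_pe w); rewrite /= ffunE => <-; rewrite H3 //.
by rewrite (eqP (valP J)).
Qed.

Lemma Wgt_eq (z z' : {ffun V -> F}) :
  Wgt r z = Wgt r z' <-> deglt r.+1 (fun x => z x - z' x).
Proof.
split => [E S HS|H].
  by move/ffunP: E => /(_ (exist _ S HS)); rewrite !ffunE /= => E; rewrite anfB E subrr.
apply/ffunP => S; rewrite !ffunE; apply/eqP; rewrite -subr_eq0 -anfB; apply/eqP.
apply: H; exact: (valP S).
Qed.

Definition compz (z : {ffun V -> F}) : {ffun V -> F} := [ffun x => z (A *m x + b)].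

Lemma Wgt_comp z z' : Wgt r (compz z) = Wgt r (compz z') <-> Wgt r z = Wgt r z'.
Proof.
split => /Wgt_eq H; apply/Wgt_eq.
  apply/(deglt_comp_iff); apply: deglt_ext H => x; by rewrite !ffunE.
apply: deglt_ext (deglt_comp A b H) => x; by rewrite !ffunE.
Qed.

Lemma Wr_comp z z' : Wgt r z = Wgt r z' ->
  Wr r (compz z) - Wr r (compz z') = pi (Wr r z - Wr r z').
Proof.
move/Wgt_eq => H.
have -> : Wr r z - Wr r z' = wr (fun x => z x - z' x).
  by apply/ffunP => J; rewrite !ffunE anfB.
rewrite -key_Wr //; apply/ffunP => J; rewrite !ffunE -anfB.
by apply: anf_ext => x; rewrite !ffunE.
Qed.

Lemma E1_part (u u' : rvec m r) z z' :
  ((pi u + Wr r (compz z), Wgt r (compz z)) == (pi u' + Wr r (compz z'), Wgt r (compz z'))) =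
  ((u + Wr r z, Wgt r z) == (u' + Wr r z', Wgt r z')).
Proof.
rewrite !xpair_eqE.
case: (boolP (Wgt r z == Wgt r z')) => E; last first.
  have -> : (Wgt r (compz z) == Wgt r (compz z')) = false.
    by apply/negbTE/eqP => /Wgt_comp /eqP; rewrite (negbTE E).
  by rewrite !andbF.
have E' : Wgt r (compz z) == Wgt r (compz z') by apply/eqP/Wgt_comp/eqP.
rewrite E' !andbT.
rewrite -subr_eq0 -[RHS]subr_eq0.
have -> : (pi u + Wr r (compz z)) - (pi u' + Wr r (compz z')) = pi ((u - u') + (Wr r z - Wr r z')).
  by rewrite pi_add pi_sub -Wr_comp ?(eqP E) // opprD addrACA.
have -> : (u + Wr r z) - (u' + Wr r z') = (u - u') + (Wr r z - Wr r z') by rewrite opprD addrACA.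
by rewrite -[X in _ == X]pi0 (inj_eq pi_inj).
Qed.

End Aff.


Section Ent.
Variable R : realType.

Lemma entropyE (T V : finType) (p : T -> R) (f : T -> V) :
  entropy p f = - \sum_t p t * log2 (\sum_(t' | f t' == f t) p t').
Proof.
rewrite /entropy; congr (- _).
rewrite [RHS](partition_big f xpredT) //=; apply: eq_bigr => v _.
rewrite mulr_suml; apply: eq_bigr => t /eqP <-; by [].
Qed.

Lemma entropy_part (T V1 V2 : finType) (p : T -> R) (f1 : T -> V1) (f2 : T -> V2) :
  (forall t t', (f1 t' == f1 t) = (f2 t' == f2 t)) -> entropy p f1 = entropy p f2.
Proof.
move=> H; rewrite !entropyE; congr (- _); apply: eq_bigr => t _.
by congr (_ * log2 _); apply: eq_bigl => t'; exact: H.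
Qed.

Lemma entropy_reindex (T V : finType) (h : T -> T) (p : T -> R) (f : T -> V) :
  injective h -> entropy p f = entropy (fun t => p (h t)) (fun t => f (h t)).
Proof.
move=> H; rewrite !entropyE (reindex_inj H) /=; congr (- _); apply: eq_bigr => t _.
by congr (_ * log2 _); rewrite (reindex_inj H).
Qed.

Lemma entropy_ext (T V : finType) (p q : T -> R) (f : T -> V) :
  p =1 q -> entropy p f = entropy q f.
Proof.
move=> E; rewrite !entropyE; congr (- _); apply: eq_bigr => t _.
by rewrite E; congr (_ * log2 _); apply: eq_bigr => t' _.
Qed.

End Ent.

Lemma comp_inj m (A : 'M[F]_m) (b : 'cV[F]_m) : A \in unitmx -> injective (@compz m A b).
Proof.
move=> hA z z' E; apply/ffunP => y.
have := congr1 (fun g : {ffun 'cV[F]_m -> F} => g (invmx A *m y + - (invmx A *m b))) E.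
by rewrite /= !ffunE T_Tinv.
Qed.

End Helpers.
Import Helpers.

Theorem lemma6p4 (R : realType) (m r : nat) (delta : R)
    (A : 'M['F_2]_m) (b : 'cV['F_2]_m) (G : {set {ffun rset m r -> 'F_2}}) :
  (1 <= m)%N -> (r <= m)%N -> 0 < delta < 2^-1 ->
  A \in unitmx -> is_subspace G ->
  dist_d delta G = dist_d delta [set pi_map A b u | u in G].
Proof.
move=> _ _ _ hA _.
set piG := [set pi_map A b u | u in G].
have Hunif u : unif R piG (pi_map A b u) = unif R G u.
  by rewrite /unif mem_imset ?card_imset //; exact: pi_inj.
have Hpz z : pZ delta (compz A b z) = pZ delta z.
  rewrite /pZ [RHS](reindex_inj (@T_inj m A b hA)); apply: eq_bigr => x _; by rewrite ffunE.
pose sig := fun w : rvec m r * {ffun 'cV['F_2]_m -> 'F_2} => (pi_map A b w.1, compz A b w.2).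
have sig_inj : injective sig.
  move=> [u z] [u' z'] [/(@pi_inj m r A b hA) -> /(comp_inj hA) ->] //.
have Hsig (V : finType) (f : rvec m r * {ffun 'cV['F_2]_m -> 'F_2} -> V) :
  entropy (fun w => unif R piG w.1 * pZ delta w.2) f =
  entropy (fun w => unif R G w.1 * pZ delta w.2) (fun w => f (sig w)).
  rewrite (entropy_reindex _ _ sig_inj); apply: entropy_ext => -[u z] /=.
  by rewrite Hunif Hpz.
have E3 : entropy (unif R piG) id = entropy (unif R G) id.
  rewrite (entropy_reindex _ _ (@pi_inj m r A b hA)) (entropy_ext _ Hunif).
  by apply: entropy_part => t t' /=; rewrite (inj_eq (@pi_inj m r A b hA)).
have E2 : entropy (fun w : rvec m r * {ffun 'cV['F_2]_m -> 'F_2} => unif R piG w.1 * pZ delta w.2) (fun w : rvec m r * {ffun 'cV['F_2]_m -> 'F_2} => Wgt r w.2) =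
          entropy (fun w : rvec m r * {ffun 'cV['F_2]_m -> 'F_2} => unif R G w.1 * pZ delta w.2) (fun w : rvec m r * {ffun 'cV['F_2]_m -> 'F_2} => Wgt r w.2).
  apply: etrans (Hsig _ _) _; apply: entropy_part => -[u z] [u' z'] /=.
  apply/eqP/eqP => [/(@Wgt_comp m r A b hA) //|H]; exact/(@Wgt_comp m r A b hA).
have E1 : entropy (fun w : rvec m r * {ffun 'cV['F_2]_m -> 'F_2} => unif R piG w.1 * pZ delta w.2) (fun w : rvec m r * {ffun 'cV['F_2]_m -> 'F_2} => (w.1 + Wr r w.2, Wgt r w.2)) =
          entropy (fun w : rvec m r * {ffun 'cV['F_2]_m -> 'F_2} => unif R G w.1 * pZ delta w.2) (fun w : rvec m r * {ffun 'cV['F_2]_m -> 'F_2} => (w.1 + Wr r w.2, Wgt r w.2)).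
  apply: etrans (Hsig _ _) _; apply: entropy_part => -[u z] [u' z'] /=.
  exact: (@E1_part m r A b hA).
rewrite /dist_d /=.
by rewrite E1 E2 E3.
Qed.
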